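(* Let $\mathbb{V}$ be a finite-dimensional real inner product space, $\mathcal{C}\subseteq\mathbb{V}$ a convex set, $\varphi:\mathbb{V}\to\mathbb{R}\cup\{+\infty\}$ a Legendre function, and $f:\mathcal{C}\to\mathbb{R}$ a function differentiable on $\operatorname{relint}\mathcal{C}$ satisfying $f(x)=\langle x,\nabla f(x)\rangle$ for all $x\in\mathcal{C}$. Then $f$ is $L$-smooth relative to $\varphi$ on $\mathcal{C}$ if and only if $$\langle x,\nabla f(x)-\nabla f(y)\rangle\le L\,D_\varphi(x\,\|\,y)\qquad\text{for all }x,y\in\operatorname{relint}\mathcal{C}.$$ Similarly, $f$ is $\mu$-strongly convex relative to $\varphi$ on $\mathcal{C}$ if and only if $$\langle x,\nabla f(x)-\nabla f(y)\rangle\ge \mu\,D_\varphi(x\,\|\,y)\qquad\text{for all }x,y\in\operatorname{relint}\mathcal{C}.$$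
   Context: A function $\varphi:\mathbb{V}\to\mathbb{R}\cup\{+\infty\}$ is Legendre if it is proper, lower semicontinuous, strictly convex and essentially smooth. Its Bregman divergence is $D_\varphi(x\,\|\,y)=\varphi(x)-\varphi(y)-\langle\nabla\varphi(y),x-y\rangle$ for $x\in\operatorname{dom}\varphi$, $y\in\operatorname{relint}\operatorname{dom}\varphi$ (here $\mathcal{C}\subseteq\operatorname{dom}\varphi$). $f$ is $L$-smooth relative to $\varphi$ on $\mathcal{C}$ (for $L>0$) if $L\varphi-f$ is convex on $\operatorname{relint}\mathcal{C}$; $f$ is $\mu$-strongly convex relative to $\varphi$ on $\mathcal{C}$ (for $\mu>0$) if $f-\mu\varphi$ is convex on $\operatorname{relint}\mathcal{C}$. *)

(* Defs.v *)
(* The finite-dimensional real inner product space V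
   is modelled as 'rV[R]_n (R : realType) with the standard dot product. *)
From HB Require Import structures.
From mathcomp Require Import all_boot all_order all_algebra.
From mathcomp Require Import all_classical all_reals all_analysis.
Set Implicit Arguments. Unset Strict Implicit. Unset Printing Implicit Defensive.
Import Order.TTheory GRing.Theory Num.Theory.
Import numFieldNormedType.Exports.
Local Open Scope classical_set_scope.
Local Open Scope ring_scope.

Section Defs.
Variables (R : realType) (n : nat).
Notation V := 'rV[R]_n.

Definition dotv (u v : V) : R := \sum_(i < n) u ord0 i * v ord0 i.

(* gradient: the vector of partial derivatives (Riesz representative of the
   differential w.r.t. dotv whenever f is differentiable) *)
Definition gradv (f : V -> R) (x : V) : V :=
  \row_(i < n) derive f x (delta_mx ord0 i : V).

Definition convex_setv (C : set V) : Prop :=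
  forall x y (t : R), C x -> C y -> 0 <= t <= 1 -> C (t *: x + (1 - t) *: y).

Definition affine_hull (C : set V) : set V :=
  [set x | exists (m : nat) (p : 'I_m -> V) (w : 'I_m -> R),
      (forall i, C (p i)) /\ \sum_(i < m) w i = 1 /\ x = \sum_(i < m) w i *: p i].

Definition relint (C : set V) : set V :=
  [set x | C x /\ exists2 e : R, 0 < e &
      forall y, affine_hull C y -> ball x e y -> C y].

Definition convex_on (A : set V) (g : V -> R) : Prop :=
  forall x y (t : R), A x -> A y -> 0 <= t <= 1 ->
    g (t *: x + (1 - t) *: y) <= t * g x + (1 - t) * g y.

Definition domv (phi : V -> \bar R) : set V := [set x | (phi x < +oo)%E].

Definition proper_fun (phi : V -> \bar R) : Prop :=
  (forall x, phi x != -oo%E) /\ (exists x, (phi x < +oo)%E).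

Definition strictly_convex (phi : V -> \bar R) : Prop :=
  forall x y (t : R), domv phi x -> domv phi y -> x != y -> 0 < t < 1 ->
    (phi ((1 - t) *: x + t *: y)%R < ((1 - t)%:E * phi x + t%:E * phi y))%E.

(* real-valued version of phi (phi is finite on its domain when proper) *)
Definition finv (phi : V -> \bar R) : V -> R := fun x => fine (phi x).

Definition essentially_smooth (phi : V -> \bar R) : Prop :=
  let D := interior (domv phi) in
  (D !=set0) /\
  (forall x, D x -> differentiable (finv phi) x) /\
  (forall (u : nat -> V) (z : V), (forall k, D (u k)) ->
      (closure D `\` D) z -> u @ \oo --> z ->
      (fun k => Num.sqrt (dotv (gradv (finv phi) (u k)) (gradv (finv phi) (u k))))
        @ \oo --> +oo).

Definition legendre (phi : V -> \bar R) : Prop :=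
  [/\ proper_fun phi, lower_semicontinuous phi, strictly_convex phi
    & essentially_smooth phi].

Definition bregman (phi : V -> \bar R) (x y : V) : R :=
  finv phi x - finv phi y - dotv (gradv (finv phi) y) (x - y).

Definition rel_smooth (L : R) (f : V -> R) (phi : V -> \bar R) (C : set V) :=
  convex_on (relint C) (fun x => L * finv phi x - f x).

Definition rel_strongly_convex (mu : R) (f : V -> R) (phi : V -> \bar R)
  (C : set V) :=
  convex_on (relint C) (fun x => f x - mu * finv phi x).

End Defs.

(* Main.v *)
Require Import Defs.
From HB Require Import structures.
From mathcomp Require Import all_boot all_order all_algebra.
From mathcomp Require Import all_classical all_reals all_analysis.
From mathcomp Require Import ring lra.
Import Order.TTheory GRing.Theory Num.Theory.
Import numFieldNormedType.Exports.
Local Open Scope classical_set_scope.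
Local Open Scope ring_scope.
Lemma dotvC {R : realType} {n : nat} (u v : 'rV[R]_n) : dotv u v = dotv v u.
Proof. by apply: eq_bigr => i _; rewrite mulrC. Qed.

Lemma dotvDr {R : realType} {n : nat} (u v w : 'rV[R]_n) :
  dotv u (v + w) = dotv u v + dotv u w.
Proof. by rewrite /dotv -big_split; apply: eq_bigr => i _; rewrite mxE mulrDr. Qed.

Lemma dotvZr {R : realType} {n : nat} (a : R) (u v : 'rV[R]_n) :
  dotv u (a *: v) = a * dotv u v.
Proof. by rewrite /dotv mulr_sumr; apply: eq_bigr => i _; rewrite mxE mulrCA. Qed.

Lemma dotvNr {R : realType} {n : nat} (u v : 'rV[R]_n) :
  dotv u (- v) = - dotv u v.
Proof. by rewrite -scaleN1r dotvZr mulN1r. Qed.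

Lemma dotvBr {R : realType} {n : nat} (u v w : 'rV[R]_n) :
  dotv u (v - w) = dotv u v - dotv u w.
Proof. by rewrite dotvDr dotvNr. Qed.

Lemma dotvDl {R : realType} {n : nat} (u v w : 'rV[R]_n) :
  dotv (v + w) u = dotv v u + dotv w u.
Proof. by rewrite dotvC dotvDr !(dotvC u). Qed.

Lemma dotvZl {R : realType} {n : nat} (a : R) (u v : 'rV[R]_n) :
  dotv (a *: v) u = a * dotv v u.
Proof. by rewrite dotvC dotvZr dotvC. Qed.

Lemma dotvBl {R : realType} {n : nat} (u v w : 'rV[R]_n) :
  dotv (v - w) u = dotv v u - dotv w u.
Proof. by rewrite dotvC dotvBr !(dotvC u). Qed.

Lemma dotv0r {R : realType} {n : nat} (u : 'rV[R]_n) : dotv u 0 = 0.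
Proof. by rewrite -(scale0r 0) dotvZr mul0r. Qed.

Lemma dot_grad {R : realType} {n : nat} (h : 'rV[R]_n -> R) (x v : 'rV[R]_n) :
  differentiable h x -> dotv (gradv h x) v = 'D_v h x.
Proof.
move=> hd; rewrite deriveE // {2}(row_sum_delta v) linear_sum.
apply: eq_bigr => i _; rewrite mxE linearZ /= mulrC.
by rewrite deriveE.
Qed.

Lemma quot_cvg {R : realType} {n : nat} (h : 'rV[R]_n -> R) (y v : 'rV[R]_n) :
  differentiable h y ->
  (fun t : R => t^-1 *: (h (t *: v + y) - h y)) @ 0^' --> dotv (gradv h y) v.
Proof.
move=> hd; rewrite dot_grad //.
exact: (diff_derivable (v:=v) hd).
Qed.
Lemma aux1 {R : realType} (t a b c : R) : 0 < t -> c <= t * a + (1 - t) * b -> t^-1 * (c - b) <= a - b.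
Proof.
move=> t0 h; rewrite -(ler_pM2l t0) mulrA mulfV ?gt_eqF // mul1r. lra.
Qed.
Lemma aux2 {R : realType} (t a b c d1 d2 : R) : 0 <= t <= 1 -> c + d1 <= a -> c + d2 <= b ->
  t * d1 + (1 - t) * d2 = 0 -> c <= t * a + (1 - t) * b.
Proof. move=> /andP[t0 t1] h1 h2 e. nra. Qed.

Lemma convex_grad {R : realType} {n : nat} (A : set 'rV[R]_n) (g : 'rV[R]_n -> R)
  (G : 'rV[R]_n -> 'rV[R]_n) :
  (forall x y (t : R), A x -> A y -> 0 <= t <= 1 -> A (t *: x + (1 - t) *: y)) ->
  (forall y v, A y ->
     (fun t : R => t^-1 *: (g (t *: v + y) - g y)) @ 0^' --> dotv (G y) v) ->
  convex_on A g <-> (forall x y, A x -> A y -> g y + dotv (G y) (x - y) <= g x).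
Proof.
move=> Aconv Hq; split.
- move=> Hc x y Ax Ay.
  have H1 := cvg_dnbhs_at_right (Hq y (x - y) Ay).
  suff : dotv (G y) (x - y) <= g x - g y by move=> hh; rewrite -lerBrDl.
  apply: (cvgr_to_le H1).
  near=> t.
  have t0 : 0 < t by near: t; exact: nbhs_right_gt.
  have t1 : t < 1 by near: t; exact: nbhs_right_lt.
  have -> : t *: (x - y) + y = t *: x + (1 - t) *: y.
    by rewrite scalerBr scalerBl scale1r addrA addrAC.
  have := Hc x y t Ax Ay; rewrite (ltW t0) (ltW t1) => /(_ isT) Hle.
  exact: aux1.
- move=> Hg x y t Ax Ay /andP[t0 t1].
  set z := t *: x + (1 - t) *: y.
  have Az : A z by apply: Aconv => //; rewrite t0 t1.
  have h1 := Hg x z Ax Az; have h2 := Hg y z Ay Az.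
  have e : t * dotv (G z) (x - z) + (1 - t) * dotv (G z) (y - z) = 0.
    rewrite -!dotvZr -dotvDr.
    have -> : t *: (x - z) + (1 - t) *: (y - z) = 0.
      rewrite !scalerBr addrACA -/z -opprD -scalerDl.
      by rewrite (_ : t + (1 - t) = 1) ?scale1r ?subrr // addrC subrK.
    by rewrite dotv0r.
  by apply: (@aux2 _ t _ _ _ _ _ _ h1 h2 e); rewrite t0 t1.
Unshelve. all: end_near.
Qed.

Lemma aff_comb {R : realType} {n : nat} (C : set 'rV[R]_n) (w y : 'rV[R]_n) (a : R) :
  affine_hull C w -> C y -> affine_hull C (a *: w + (1 - a) *: y).
Proof.
case=> m [p [wt [Hp [Hs ->]]]] Cy.
exists m.+1, (fun i => if unlift ord0 i is Some j then p j else y),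
  (fun i => if unlift ord0 i is Some j then a * wt j else 1 - a).
split; first by move=> i; case: (unlift ord0 i).
rewrite !big_ord_recl /= !unlift_none.
under eq_bigr do rewrite liftK.
split; first by rewrite -mulr_sumr Hs mulr1; ring.
rewrite addrC; congr (_ + _); rewrite scaler_sumr; apply: eq_bigr => i _.
by rewrite liftK scalerA.
Qed.

Lemma relint_conv {R : realType} {n : nat} (C : set 'rV[R]_n) x y (t : R) :
  convex_setv C -> relint C x -> relint C y -> 0 <= t <= 1 ->
  relint C (t *: x + (1 - t) *: y).
Proof.
move=> HC [Cx [e e0 He]] [Cy Hy] /andP[t0 t1].
have [->|tn0] := eqVneq t 0.
  by rewrite scale0r add0r subr0 scale1r; split.
have tp : 0 < t by rewrite lt_def tn0.
split; first by apply: HC => //; rewrite t0 t1.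
exists (t * e); first by rewrite mulr_gt0.
move=> w Hw Hb.
set x' := t^-1 *: w + (1 - t^-1) *: y.
have Hx' : affine_hull C x' by exact: aff_comb.
have Hbx : ball x e x'.
  rewrite -ball_normE /= .
  have -> : x - x' = t^-1 *: (t *: x + (1 - t) *: y - w).
    apply/matrixP => i j; rewrite /x' !mxE; field.
    exact: tn0.
  rewrite normrZ gtr0_norm ?invr_gt0 //.
  rewrite -ball_normE /= in Hb.
  by rewrite ltr_pdivrMl // .
have Cx' := He x' Hx' Hbx.
have -> : w = t *: x' + (1 - t) *: y.
  rewrite /x' scalerDr scalerA mulfV // scale1r scalerA mulrBr mulr1 mulfV //.
  by rewrite -addrA -scalerDl (_ : t - 1 + (1 - t) = 0) ?scale0r ?addr0 //; ring.
by apply: HC => //; rewrite (ltW tp) t1.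
Qed.

Theorem mainTheorem3 (R : realType) (n : nat) (C : set 'rV[R]_n)
  (phi : 'rV[R]_n -> \bar R) (f : 'rV[R]_n -> R) :
  convex_setv C ->
  legendre phi ->
  C `<=` domv phi ->
  relint C `<=` interior (domv phi) ->
  (forall x, relint C x -> differentiable f x) ->
  (forall x, relint C x -> f x = dotv x (gradv f x)) ->
  (forall L : R, 0 < L ->
     (rel_smooth L f phi C <->
      (forall x y, relint C x -> relint C y ->
         dotv x (gradv f x - gradv f y) <= L * bregman phi x y))) /\
  (forall mu : R, 0 < mu ->
     (rel_strongly_convex mu f phi C <->
      (forall x y, relint C x -> relint C y ->
         dotv x (gradv f x - gradv f y) >= mu * bregman phi x y))).
Proof.
move=> HC Hleg HCd Hint Hfd Hf.
have Hpd : forall x, relint C x -> differentiable (Defs.finv phi) x.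
  by case: Hleg => _ _ _ [_ [Hd _]] x Hx; apply: Hd; apply: Hint.
have Aconv : forall x y (t : R), relint C x -> relint C y -> 0 <= t <= 1 ->
    relint C (t *: x + (1 - t) *: y).
  by move=> x y t Hx Hy Ht; apply: relint_conv.
split.
- move=> L _.
  rewrite /rel_smooth (@convex_grad _ _ _ _
     (fun y => L *: gradv (Defs.finv phi) y - gradv f y) Aconv).
  + have E : forall x y, relint C x -> relint C y ->
        (L * Defs.finv phi x - f x) - ((L * Defs.finv phi y - f y) +
          dotv (L *: gradv (Defs.finv phi) y - gradv f y) (x - y)) =
        L * bregman phi x y - dotv x (gradv f x - gradv f y).
      move=> x y Hx Hy.
      rewrite /bregman !dotvBl dotvZl !dotvBr (dotvC (gradv f y) x)
        (dotvC (gradv f y) y) -(Hf x Hx) -(Hf y Hy).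
      ring.
    split => H x y Hx Hy.
      by have := H x y Hx Hy; rewrite -subr_ge0 E // subr_ge0.
    by rewrite -subr_ge0 E // subr_ge0; exact: H.
  + move=> y v Hy.
    have h1 := quot_cvg _ _ v (Hpd y Hy).
    have h2 := quot_cvg _ _ v (Hfd y Hy).
    have h3 := cvgB (cvgMl_tmp (a:=L) h1) h2.
    rewrite dotvBl dotvZl.
    apply: cvg_trans; last exact: h3.
    apply: near_eq_cvg; apply: nearW => t /=.
    rewrite !fctE /GRing.scale /=; ring.
- move=> mu _.
  rewrite /rel_strongly_convex (@convex_grad _ _ _ _
     (fun y => gradv f y - mu *: gradv (Defs.finv phi) y) Aconv).
  + have E : forall x y, relint C x -> relint C y ->
        (f x - mu * Defs.finv phi x) - ((f y - mu * Defs.finv phi y) +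
          dotv (gradv f y - mu *: gradv (Defs.finv phi) y) (x - y)) =
        dotv x (gradv f x - gradv f y) - mu * bregman phi x y.
      move=> x y Hx Hy.
      rewrite /bregman !dotvBl dotvZl !dotvBr (dotvC (gradv f y) x)
        (dotvC (gradv f y) y) -(Hf x Hx) -(Hf y Hy).
      ring.
    split => H x y Hx Hy.
      by have := H x y Hx Hy; rewrite -subr_ge0 E // subr_ge0.
    by rewrite -subr_ge0 E // subr_ge0; exact: H.
  + move=> y v Hy.
    have h1 := quot_cvg _ _ v (Hpd y Hy).
    have h2 := quot_cvg _ _ v (Hfd y Hy).
    have h3 := cvgB h2 (cvgMl_tmp (a:=mu) h1).
    rewrite dotvBl dotvZl.
    apply: cvg_trans; last exact: h3.
    apply: near_eq_cvg; apply: nearW => t /=.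
    rewrite !fctE /GRing.scale /=; ring.
Unshelve. all: end_near.
Qed.
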